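(* Let $(X,\leq)$ be a partially ordered set and suppose $d$ is a metric on $X$ such that $(X,d)$ is a complete metric space. Let $F:X\times X\to X$ be a continuous mapping having the mixed monotone property on $X$. Assume that for all $x,y,u,v\in X$ with $x\geq u$ and $y\leq v$, $$d\big(F(x,y),F(u,v)\big)\leq \delta(x,y,u,v)\,\big[d(x,u)+d(y,v)\big],$$ where $$\delta(x,y,u,v)=\frac{d(x,F(u,v))+d(y,F(v,u))+d(u,F(x,y))+d(v,F(y,x))}{1+2\big[d(x,F(x,y))+d(y,F(y,x))+d(u,F(u,v))+d(v,F(v,u))\big]}.$$ If there exist $x_0,y_0\in X$ such that $x_0\leq F(x_0,y_0)$ and $y_0\geq F(y_0,x_0)$, then $F$ has at least one coupled fixed point, i.e., there exist $x,y\in X$ with $x=F(x,y)$ and $y=F(y,x)$.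
   Context: A mapping $F:X\times X\to X$ on a partially ordered set $(X,\leq)$ has the mixed monotone property if $F(x,y)$ is monotone nondecreasing in $x$ and monotone nonincreasing in $y$: for all $x,y\in X$, $x_1\leq x_2$ implies $F(x_1,y)\leq F(x_2,y)$, and $y_1\leq y_2$ implies $F(x,y_1)\geq F(x,y_2)$. An element $(x,y)\in X\times X$ is a coupled fixed point of $F$ if $F(x,y)=x$ and $F(y,x)=y$. *)

(* Defs.v *)
From Stdlib Require Import Reals.
Open Scope R_scope.

Definition is_metric {X : Type} (d : X -> X -> R) : Prop :=
  (forall x y, 0 <= d x y) /\
  (forall x y, d x y = 0 <-> x = y) /\
  (forall x y, d x y = d y x) /\
  (forall x y z, d x z <= d x y + d y z).

Definition is_partial_order {X : Type} (le : X -> X -> Prop) : Prop :=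
  (forall x, le x x) /\
  (forall x y, le x y -> le y x -> x = y) /\
  (forall x y z, le x y -> le y z -> le x z).

Definition cauchy_seq {X : Type} (d : X -> X -> R) (u : nat -> X) : Prop :=
  forall eps, 0 < eps -> exists N : nat, forall m n, (N <= m)%nat -> (N <= n)%nat ->
    d (u m) (u n) < eps.

Definition seq_converges {X : Type} (d : X -> X -> R) (u : nat -> X) (l : X) : Prop :=
  forall eps, 0 < eps -> exists N : nat, forall n, (N <= n)%nat -> d (u n) l < eps.

Definition complete_metric {X : Type} (d : X -> X -> R) : Prop :=
  forall u : nat -> X, cauchy_seq d u -> exists l, seq_converges d u l.

Definition continuous2 {X : Type} (d : X -> X -> R) (F : X -> X -> X) : Prop :=
  forall x y eps, 0 < eps -> exists delta, 0 < delta /\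
    forall u v, d x u < delta -> d y v < delta -> d (F x y) (F u v) < eps.

Definition mixed_monotone {X : Type} (le : X -> X -> Prop) (F : X -> X -> X) : Prop :=
  (forall x1 x2 y, le x1 x2 -> le (F x1 y) (F x2 y)) /\
  (forall x y1 y2, le y1 y2 -> le (F x y2) (F x y1)).

Definition delta_fn {X : Type} (d : X -> X -> R) (F : X -> X -> X) (x y u v : X) : R :=
  (d x (F u v) + d y (F v u) + d u (F x y) + d v (F y x)) /
  (1 + 2 * (d x (F x y) + d y (F y x) + d u (F u v) + d v (F v u))).

(* Main.v *)
Require Import Defs.
From Stdlib Require Import Reals Lra Lia Psatz.
Open Scope R_scope.

Fixpoint iter2 {X : Type} (F : X -> X -> X) (x0 y0 : X) (n : nat) : X * X :=
  match n with
  | O => (x0, y0)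
  | S m => let p := iter2 F x0 y0 m in (F (fst p) (snd p), F (snd p) (fst p))
  end.

Lemma step_ineq (X : Type) (le : X -> X -> Prop) (d : X -> X -> R)
  (F : X -> X -> X) (Hd : is_metric d)
  (Hcontr : forall x y u v, le u x -> le y v ->
     d (F x y) (F u v) <= delta_fn d F x y u v * (d x u + d y v))
  (x y : X) (H1 : le x (F x y)) (H2 : le (F y x) y) :
  let x' := F x y in let y' := F y x in
  let x'' := F x' y' in let y'' := F y' x' in
  let A := d x x' + d y y' in let B := d x' x'' + d y' y'' in
  B * (1 + 2 * (A + B)) <= 2 * (A + B) * A.
Proof.
  destruct Hd as [Hpos [Hz [Hs Ht]]].
  intros x' y' x'' y'' A B.
  assert (Hx'x' : d x' x' = 0) by (apply Hz; reflexivity).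
  assert (Hy'y' : d y' y' = 0) by (apply Hz; reflexivity).
  assert (T1 : d x x'' <= d x x' + d x' x'') by apply Ht.
  assert (T2 : d y y'' <= d y y' + d y' y'') by apply Ht.
  assert (P1 := Hpos x x'). assert (P2 := Hpos y y').
  assert (P3 := Hpos x' x''). assert (P4 := Hpos y' y'').
  assert (HA : 0 <= A) by (unfold A; lra).
  assert (HD : 0 < 1 + 2 * (A + B)) by (unfold A, B; lra).
  pose proof (Hcontr x' y' x y H1 H2) as C1.
  pose proof (Hcontr y x y' x' H2 H1) as C2.
  unfold delta_fn in C1, C2. fold x' y' x'' y'' in C1, C2.
  rewrite Hx'x', Hy'y' in C1. rewrite Hx'x', Hy'y' in C2.
  rewrite (Hs x' x), (Hs y' y) in C1. fold A in C1.
  set (D := 1 + 2 * (A + B)) in *.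
  assert (ED1 : 1 + 2 * (d x' x'' + d y' y'' + d x x' + d y y') = D) by (unfold D, A, B; ring).
  assert (ED2 : 1 + 2 * (d y y' + d x x' + d y' y'' + d x' x'') = D) by (unfold D, A, B; ring).
  rewrite ED1 in C1. rewrite ED2 in C2.
  assert (EA : d y y' + d x x' = A) by (unfold A; ring). rewrite EA in C2.
  assert (K1 : d x'' x' * D <= (0 + 0 + d x x'' + d y y'') * A).
  { apply Rmult_le_compat_r with (r := D) in C1; [|lra].
    replace ((0 + 0 + d x x'' + d y y'') / D * A * D) with ((0 + 0 + d x x'' + d y y'') * A) in C1 by (field; lra).
    exact C1. }
  assert (K2 : d y' y'' * D <= (d y y'' + d x x'' + 0 + 0) * A).
  { apply Rmult_le_compat_r with (r := D) in C2; [|lra].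
    replace ((d y y'' + d x x'' + 0 + 0) / D * A * D) with ((d y y'' + d x x'' + 0 + 0) * A) in C2 by (field; lra).
    exact C2. }
  assert (K3 : (0 + 0 + d x x'' + d y y'') * A <= (A + B) * A).
  { apply Rmult_le_compat_r; [lra|]. unfold A, B; lra. }
  assert (K4 : (d y y'' + d x x'' + 0 + 0) * A <= (A + B) * A).
  { apply Rmult_le_compat_r; [lra|]. unfold A, B; lra. }
  rewrite (Hs x'' x') in K1. unfold B at 1. lra.
Qed.

Lemma geom_cauchy (X : Type) (d : X -> X -> R) (Hd : is_metric d)
  (z : nat -> X) (C k : R) (HC : 0 <= C) (Hk0 : 0 <= k) (Hk1 : k < 1)
  (H : forall n, d (z n) (z (S n)) <= C * k ^ n) : cauchy_seq d z.
Proof.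
  destruct Hd as [Hpos [Hz [Hs Ht]]].
  assert (S1 : forall n p, d (z n) (z (n + p)%nat) <= C * k ^ n * (1 - k ^ p) / (1 - k)).
  { intros n p. induction p as [|p IH].
    - rewrite Nat.add_0_r. assert (d (z n) (z n) = 0) by (apply Hz; reflexivity).
      rewrite H0. simpl. replace (C * k ^ n * (1 - 1) / (1 - k)) with 0 by (field; lra). lra.
    - replace (n + S p)%nat with (S (n + p)) by lia.
      pose proof (Ht (z n) (z (n + p)%nat) (z (S (n + p)))).
      pose proof (H (n + p)%nat). rewrite pow_add in H1.
      assert (E : C * k ^ n * (1 - k ^ p) / (1 - k) + C * (k ^ n * k ^ p) =
                  C * k ^ n * (1 - k ^ S p) / (1 - k)) by (simpl; field; lra).
      lra. }
  assert (S2 : forall n p, d (z n) (z (n + p)%nat) <= C * k ^ n / (1 - k)).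
  { intros n p. eapply Rle_trans; [apply S1|].
    unfold Rdiv. apply Rmult_le_compat_r.
    - apply Rlt_le, Rinv_0_lt_compat; lra.
    - pose proof (pow_le k p Hk0). pose proof (pow_le k n Hk0).
      assert (0 <= C * k ^ n) by (apply Rmult_le_pos; lra). nra. }
  intros eps Heps.
  assert (Hy : 0 < eps * (1 - k) / (C + 1)).
  { unfold Rdiv. apply Rmult_lt_0_compat; [apply Rmult_lt_0_compat; lra|].
    apply Rinv_0_lt_compat; lra. }
  assert (Hak : Rabs k < 1) by (rewrite Rabs_pos_eq; lra).
  destruct (pow_lt_1_zero k Hak _ Hy) as [N HN].
  exists N.
  assert (G : forall m n, (N <= m)%nat -> (m <= n)%nat -> d (z m) (z n) < eps).
  { intros m n Hm Hmn. replace n with (m + (n - m))%nat by lia.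
    eapply Rle_lt_trans; [apply S2|].
    pose proof (HN m Hm) as Hm'. rewrite Rabs_pos_eq in Hm' by (apply pow_le; lra).
    pose proof (pow_le k m Hk0).
    apply Rmult_lt_reg_r with (r := 1 - k); [lra|].
    replace (C * k ^ m / (1 - k) * (1 - k)) with (C * k ^ m) by (field; lra).
    apply Rmult_lt_compat_l with (r := C + 1) in Hm'; [|lra].
    replace ((C + 1) * (eps * (1 - k) / (C + 1))) with (eps * (1 - k)) in Hm' by (field; lra).
    nra. }
  intros m n Hm Hn. destruct (Nat.le_ge_cases m n).
  - apply G; auto.
  - rewrite Hs. apply G; auto.
Qed.

Lemma limit_fixed (X : Type) (d : X -> X -> R) (Hd : is_metric d)
  (F : X -> X -> X) (Hcont : continuous2 d F) (xs ys : nat -> X) (a b : X)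
  (Hx : seq_converges d xs a) (Hy : seq_converges d ys b)
  (Hrec : forall n, xs (S n) = F (xs n) (ys n)) : F a b = a.
Proof.
  destruct Hd as [Hpos [Hz [Hs Ht]]].
  apply Hz.
  destruct (Rle_lt_or_eq_dec 0 (d (F a b) a) (Hpos _ _)) as [Hlt|Heq]; [|auto].
  exfalso. set (e := d (F a b) a) in *.
  destruct (Hcont a b (e / 2)) as [del [Hdel Hc]]; [lra|].
  destruct (Hx del Hdel) as [N1 HN1].
  destruct (Hy del Hdel) as [N2 HN2].
  destruct (Hx (e / 2)) as [N3 HN3]; [lra|].
  set (n := (N1 + N2 + N3)%nat).
  assert (A1 : d a (xs n) < del) by (rewrite Hs; apply HN1; unfold n; lia).
  assert (A2 : d b (ys n) < del) by (rewrite Hs; apply HN2; unfold n; lia).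
  assert (A3 : d (xs (S n)) a < e / 2) by (apply HN3; unfold n; lia).
  pose proof (Hc _ _ A1 A2) as A4. rewrite <- Hrec in A4.
  pose proof (Ht (F a b) (xs (S n)) a). unfold e in *. lra.
Qed.

Theorem theorem2p1 (X : Type) (le : X -> X -> Prop) (d : X -> X -> R)
  (F : X -> X -> X)
  (Hle : is_partial_order le) (Hd : is_metric d) (Hcomp : complete_metric d)
  (Hcont : continuous2 d F) (Hmono : mixed_monotone le F)
  (Hcontr : forall x y u v, le u x -> le y v ->
     d (F x y) (F u v) <= delta_fn d F x y u v * (d x u + d y v))
  (Hinit : exists x0 y0, le x0 (F x0 y0) /\ le (F y0 x0) y0) :
  exists x y, F x y = x /\ F y x = y.
Proof.
  destruct Hinit as [x0 [y0 [I1 I2]]].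
  destruct Hle as [Hrefl [Hanti Htrans]].
  destruct Hmono as [M1 M2].
  set (xs := fun n => fst (iter2 F x0 y0 n)).
  set (ys := fun n => snd (iter2 F x0 y0 n)).
  assert (Rx : forall n, xs (S n) = F (xs n) (ys n)) by reflexivity.
  assert (Ry : forall n, ys (S n) = F (ys n) (xs n)) by reflexivity.
  assert (Mono : forall n, le (xs n) (xs (S n)) /\ le (ys (S n)) (ys n)).
  { induction n as [|n [IH1 IH2]].
    - split; [exact I1|exact I2].
    - rewrite (Rx (S n)), (Ry (S n)), (Rx n), (Ry n).
      rewrite (Rx n) in IH1. rewrite (Ry n) in IH2.
      split.
      + eapply Htrans; [apply M1; exact IH1|]. apply M2. rewrite <- (Ry n). exact IH2.
      + eapply Htrans; [apply M1; exact IH2|]. apply M2. rewrite <- (Rx n). exact IH1. }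
  set (a := fun n => d (xs n) (xs (S n)) + d (ys n) (ys (S n))).
  pose proof Hd as Hd'. destruct Hd' as [Hpos _].
  assert (Apos : forall n, 0 <= a n).
  { intro n. unfold a. pose proof (Hpos (xs n) (xs (S n))). pose proof (Hpos (ys n) (ys (S n))). lra. }
  assert (Rec : forall n, a (S n) * (1 + 2 * (a n + a (S n))) <= 2 * (a n + a (S n)) * a n).
  { intro n. destruct (Mono n) as [H1 H2].
    rewrite Rx in H1. rewrite Ry in H2.
    exact (step_ineq X le d F Hd Hcontr (xs n) (ys n) H1 H2). }
  set (A := a 0%nat).
  set (k := 4 * A / (1 + 4 * A)).
  assert (HA : 0 <= A) by apply Apos.
  assert (Hk0 : 0 <= k).
  { unfold k, Rdiv. apply Rmult_le_pos; [lra|]. apply Rlt_le, Rinv_0_lt_compat; lra. }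
  assert (Hk1 : k < 1).
  { unfold k. apply Rmult_lt_reg_r with (r := 1 + 4 * A); [lra|].
    replace (4 * A / (1 + 4 * A) * (1 + 4 * A)) with (4 * A) by (field; lra). lra. }
  assert (Bnd : forall n, a n <= A * k ^ n /\ a n <= A).
  { induction n as [|n [IH1 IH2]].
    - simpl. unfold A. lra.
    - pose proof (Rec n) as Rn. pose proof (Apos n). pose proof (Apos (S n)).
      set (u := a n) in *. set (v := a (S n)) in *.
      assert (Hvu : v <= u) by nra.
      assert (E1 : v <= 2 * (u + v) * (u - v)) by nra.
      assert (E2 : 2 * (u + v) * (u - v) <= 4 * A * (u - v)) by nra.
      assert (E3 : v * (1 + 4 * A) <= 4 * A * u) by lra.
      assert (E4 : v <= k * u).
      { unfold k. apply Rmult_le_reg_r with (r := 1 + 4 * A); [lra|].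
        replace (4 * A / (1 + 4 * A) * u * (1 + 4 * A)) with (4 * A * u) by (field; lra). lra. }
      split; [|lra].
      simpl. assert (k * u <= k * (A * k ^ n)) by (apply Rmult_le_compat_l; lra). lra. }
  assert (Cx : cauchy_seq d xs).
  { apply (geom_cauchy X d Hd xs A k HA Hk0 Hk1). intro n.
    destruct (Bnd n) as [B1 _]. pose proof (Hpos (ys n) (ys (S n))). unfold a in B1. lra. }
  assert (Cy : cauchy_seq d ys).
  { apply (geom_cauchy X d Hd ys A k HA Hk0 Hk1). intro n.
    destruct (Bnd n) as [B1 _]. pose proof (Hpos (xs n) (xs (S n))). unfold a in B1. lra. }
  destruct (Hcomp xs Cx) as [x Hx].
  destruct (Hcomp ys Cy) as [y Hy].
  exists x, y. split.
  - exact (limit_fixed X d Hd F Hcont xs ys x y Hx Hy Rx).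
  - exact (limit_fixed X d Hd F Hcont ys xs y x Hy Hx Ry).
Qed.
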